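(* Let $(p_j)_{j\ge 0}$ be a probability distribution on $\mathbb N$ with $0<p_0+p_1<1$, probability generating function $P(z)=\sum_{j\ge0}p_jz^j$ and mean $m=P'(1)<1$, and let $G(z)=\sum_{j\ge1}g_jz^j$ be the probability generating function of the Yaglom limit of the Galton–Watson process with offspring distribution $(p_j)$. If the power series $P(z)$ has radius of convergence $r_P>1$, then the power series $G(z)$ has radius of convergence $r_G>1$.
   Context: A Galton–Watson process $\{Z_n\}$ is the Markov chain on $\mathbb N$ with $Z_n=\sum_{i=1}^{Z_{n-1}}\theta_i^{(n)}$, the $\theta_i^{(n)}$ i.i.d. with law $(p_j)$, and $0$ absorbing. For $m<1$ the Yaglom limit is the unique probability distribution $(g_j)_{j\ge1}$ with $\lim_{n\to\infty}\mathbb P(Z_n=j\mid Z_n>0,Z_0=\ell)=g_j$ for all $\ell,j\ge1$; its generating function $G$ is the unique probability generating function with $G(0)=0$ and $G(P(z))=mG(z)+1-m$ for $z\in[0,1]$. *)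

(* Defs.v *)
From Stdlib Require Import Reals.
From Coquelicot Require Import Coquelicot.
Open Scope R_scope.

Definition conv (a b : nat -> R) (n : nat) : R :=
  sum_n (fun k => a k * b (n - k)%nat) n.

Fixpoint convpow (p : nat -> R) (i : nat) : nat -> R :=
  match i with
  | O => fun j => if Nat.eqb j 0 then 1 else 0
  | S i' => conv p (convpow p i')
  end.

(* One-step transition probabilities of the Galton-Watson chain:
   P(Z_n = j | Z_{n-1} = i) = p^{*i}(j)  (0 is absorbing since p^{*0} = delta_0). *)
Definition gw_trans (p : nat -> R) (i j : nat) : R := convpow p i j.

(* n-step transition probabilities  P(Z_n = j | Z_0 = l)
   (Chapman-Kolmogorov: sum over the state at time n-1). *)
Fixpoint gw_nstep (p : nat -> R) (n : nat) (l j : nat) : R :=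
  match n with
  | O => if Nat.eqb l j then 1 else 0
  | S n' => Series (fun i => gw_nstep p n' l i * gw_trans p i j)
  end.

(* P(Z_n = j | Z_n > 0, Z_0 = l) *)
Definition gw_cond (p : nat -> R) (n l j : nat) : R :=
  gw_nstep p n l j / (1 - gw_nstep p n l 0).

Definition prob_distr (p : nat -> R) : Prop :=
  (forall j, 0 <= p j) /\ is_series p 1.

Definition is_yaglom_limit (p g : nat -> R) : Prop :=
  prob_distr g /\ g 0%nat = 0 /\
  forall l j : nat, (1 <= l)%nat -> (1 <= j)%nat ->
    is_lim_seq (fun n => gw_cond p n l j) (g j).

(* Main.v *)
Require Import Defs.
From Stdlib Require Import Reals.
From Coquelicot Require Import Coquelicot.
From Stdlib Require Import Lra Lia Psatz.
Open Scope R_scope.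

Lemma series_lim (a : nat -> R) l : is_series a l -> is_lim_seq (sum_n a) l.
Proof. intro H. exact H. Qed.
Lemma lim_series (a : nat -> R) l : is_lim_seq (sum_n a) (Finite l) -> is_series a l.
Proof. intro H. exact H. Qed.

Lemma sum_n_nonneg (w : nat -> R) N : (forall n, 0 <= w n) -> 0 <= sum_n w N.
Proof. intro H; induction N. rewrite sum_O; auto. rewrite sum_Sn; simpl. unfold plus; simpl. specialize (H (S N)). lra. Qed.

Lemma sum_n_mono (w : nat -> R) N k : (forall n, 0 <= w n) -> (N <= k)%nat -> sum_n w N <= sum_n w k.
Proof. intros H Hk; induction Hk. lra. rewrite sum_Sn; unfold plus; simpl. specialize (H (S m)). lra. Qed.

Lemma psum_le (w : nat -> R) L N : (forall n, 0 <= w n) -> is_series w L -> sum_n w N <= L.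
Proof.
  intros H HL. apply series_lim in HL.
  assert (Hc := is_lim_seq_const (sum_n w N)).
  assert (Rbar_le (sum_n w N) L). { apply (is_lim_seq_le_loc _ _ _ _ ) with (2 := Hc) (3 := HL).
    exists N. intros k Hk. apply sum_n_mono; auto. }
  exact H0.
Qed.

Lemma series_le' (a b : nat -> R) la lb : is_series a la -> is_series b lb -> (forall n, a n <= b n) -> la <= lb.
Proof.
  intros Ha Hb H. apply series_lim in Ha; apply series_lim in Hb.
  assert (Rbar_le la lb). { apply (is_lim_seq_le _ _ _ _) with (2:=Ha) (3:=Hb).
  intro n. induction n. rewrite !sum_O; auto. rewrite !sum_Sn; unfold plus; simpl. specialize (H (S n)); lra. }
  exact H0.
Qed.

Lemma bounded_ex_series (w : nat -> R) M : (forall n, 0 <= w n) -> (forall N, sum_n w N <= M) -> ex_series w.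
Proof.
  intros H HM. destruct (ex_finite_lim_seq_incr (sum_n w) M) as [l Hl].
  intro n. rewrite sum_Sn; unfold plus; simpl. specialize (H (S n)); lra. auto.
  exists l. exact Hl.
Qed.

Lemma series_nonneg (w : nat -> R) L : (forall n, 0 <= w n) -> is_series w L -> 0 <= L.
Proof. intros H HL. apply Rle_trans with (sum_n w 0). apply sum_n_nonneg; auto. apply psum_le; auto. Qed.

Lemma term_le (w : nat -> R) L n : (forall n, 0 <= w n) -> is_series w L -> w n <= L.
Proof. intros H HL. apply Rle_trans with (sum_n w n).
  destruct n. rewrite sum_O; lra. rewrite sum_Sn; unfold plus; simpl. assert (0 <= sum_n w n) by (apply sum_n_nonneg; auto). lra.
  apply psum_le; auto. Qed.

Lemma term0n_le (w : nat -> R) L n : (1 <= n)%nat -> (forall n, 0 <= w n) -> is_series w L -> w 0%nat + w n <= L.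
Proof. intros Hn H HL. apply Rle_trans with (sum_n w n).
  destruct n. lia. rewrite sum_Sn; unfold plus; simpl.
  assert (w 0%nat <= sum_n w n). { apply Rle_trans with (sum_n w 0). rewrite sum_O; lra. apply sum_n_mono; auto; lia. } lra.
  apply psum_le; auto. Qed.

Lemma finsum_series (a : nat -> nat -> R) (A : nat -> R) N :
  (forall j, is_series (fun i => a i j) (A j)) ->
  is_series (fun i => sum_n (fun j => a i j) N) (sum_n A N).
Proof.
  intro H. induction N.
  - rewrite sum_O. apply is_series_ext with (fun i => a i 0%nat). intro; rewrite sum_O; auto. auto.
  - rewrite sum_Sn. apply is_series_ext with (fun i => plus (sum_n (fun j => a i j) N) (a i (S N))).
    intro; rewrite sum_Sn; auto. exact (is_series_plus _ _ _ _ IHN (H (S N))).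
Qed.

Lemma lim_le_const (w : nat -> R) L M : is_series w L -> (forall N, sum_n w N <= M) -> L <= M.
Proof.
  intros HL H. apply series_lim in HL.
  assert (Rbar_le L M). { apply (is_lim_seq_le _ _ _ _) with (2:=HL) (3:=is_lim_seq_const M). auto. }
  exact H0.
Qed.

Lemma tonelli (a : nat -> nat -> R) (A : nat -> R) L :
  (forall i j, 0 <= a i j) -> (forall i, is_series (a i) (A i)) -> is_series A L ->
  (forall j, ex_series (fun i => a i j)) /\ is_series (fun j => Series (fun i => a i j)) L.
Proof.
  intros Hpos HA HL.
  assert (Hcol : forall j, ex_series (fun i => a i j)).
  { intro j. apply (ex_series_le (K:=R_AbsRing) (V:=R_CompleteNormedModule)) with A. intro i. change (norm (a i j)) with (Rabs (a i j)).
    rewrite Rabs_pos_eq by auto. apply term_le; auto. exists L; auto. }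
  split; auto.
  set (v := fun j => Series (fun i => a i j)).
  assert (Hv : forall j, is_series (fun i => a i j) (v j)) by (intro j; apply Series_correct; auto).
  assert (Hv0 : forall j, 0 <= v j) by (intro j; apply series_nonneg with (fun i => a i j); auto).
  assert (Hps : forall N, sum_n v N <= L).
  { intro N. apply series_le' with (1 := finsum_series a v N Hv) (2 := HL).
    intro i. apply psum_le; auto. }
  destruct (bounded_ex_series v L Hv0 Hps) as [Lv HLv].
  assert (Lv <= L) by (apply lim_le_const with v; auto).
  assert (L <= Lv).
  { apply lim_le_const with A; auto. intro M.
    apply series_le' with (1 := finsum_series (fun j i => a i j) A M HA) (2 := HLv).
    intro j. apply psum_le; auto. }
  replace L with Lv by lra. exact HLv.
Qed.
Lemma conv_nonneg a b n : (forall k, 0 <= a k) -> (forall k, 0 <= b k) -> 0 <= conv a b n.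
Proof. intros. unfold conv. apply sum_n_nonneg. intro; apply Rmult_le_pos; auto. Qed.

Lemma convpow_nonneg p i j : (forall k, 0 <= p k) -> 0 <= convpow p i j.
Proof. intro H. revert j; induction i; intro j; simpl.
  destruct (Nat.eqb j 0); lra. apply conv_nonneg; auto. Qed.

Lemma delta_series (c : R) x : is_series (fun j => (if Nat.eqb j 0 then c else 0) * x ^ j) c.
Proof. apply lim_series. apply is_lim_seq_ext with (fun _ => c). 2: apply is_lim_seq_const.
  intro n; induction n. rewrite sum_O; simpl; ring. rewrite sum_Sn, <- IHn; unfold plus; simpl; ring. Qed.

Lemma convpow_gf p x P0 : (forall j, 0 <= p j) -> 0 <= x -> is_series (fun j => p j * x^j) P0 ->
  forall i, is_series (fun j => convpow p i j * x^j) (P0^i).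
Proof.
  intros Hp Hx HP i. induction i.
  - simpl. apply delta_series.
  - simpl. assert (H := is_series_mult_pos _ _ _ _ HP IHi).
    eapply is_series_ext; [| apply H].
    2: intro; apply Rmult_le_pos; auto; apply pow_le; auto.
    2: intro; apply Rmult_le_pos; [apply convpow_nonneg; auto| apply pow_le; auto].
    intro n. simpl. unfold conv. rewrite sum_n_Reals. rewrite Rmult_comm, scal_sum.
    apply sum_eq. intros k Hk. replace (x ^ n) with (x ^ k * x ^ (n - k)). ring. rewrite <- pow_add. f_equal. lia.
Qed.

Lemma Series_nonneg_any (a : nat -> R) : (forall n, 0 <= a n) -> 0 <= Series a.
Proof.
  intro H. unfold Series.
  assert (Hl : ex_lim_seq (sum_n a)).
  { apply ex_lim_seq_incr. intro n. rewrite sum_Sn; unfold plus; simpl. specialize (H (S n)); lra. }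
  apply Lim_seq_correct in Hl.
  destruct (Lim_seq (sum_n a)) as [l| |] eqn:E; simpl; try lra.
  assert (Rbar_le 0 l). { apply (is_lim_seq_le _ _ _ _) with (2 := is_lim_seq_const 0) (3 := Hl).
    intro; apply sum_n_nonneg; auto. } exact H0.
Qed.

Lemma delta1_series x : is_series (fun j => (if Nat.eqb 1 j then 1 else 0) * x ^ j) x.
Proof. apply lim_series. apply (is_lim_seq_incr_n _ 1).
  apply is_lim_seq_ext with (fun _ => x). 2: apply is_lim_seq_const.
  intro n; induction n. simpl. rewrite sum_Sn, sum_O; unfold plus; simpl. change (x = 0 * 1 + 1 * (x * 1)). ring.
  replace (S n + 1)%nat with (S (S n)) by lia. rewrite sum_Sn. replace (S n) with (n + 1)%nat at 1 by lia. rewrite <- IHn; unfold plus; simpl. ring. Qed.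

Lemma iter_swap (f : R -> R) n x : Nat.iter n f (f x) = f (Nat.iter n f x).
Proof. induction n; simpl; congruence. Qed.

Lemma gw_gf (p : nat -> R) (Pf : R -> R) z :
  (forall j, 0 <= p j) -> 1 <= z ->
  (forall x, 0 <= x <= z -> is_series (fun j => p j * x^j) (Pf x) /\ 0 <= Pf x <= z) ->
  Pf 1 = 1 ->
  forall n, (forall j, 0 <= gw_nstep p n 1 j) /\
    forall x, 0 <= x <= z -> is_series (fun j => gw_nstep p n 1 j * x^j) (Nat.iter n Pf x).
Proof.
  intros Hp Hz HP HP1 n. induction n as [|n [IH0 IH]].
  - split. intro j; destruct j as [|[|j]]; simpl; lra.
    intros x _; simpl. apply delta1_series.
  - assert (key : forall x, 0 <= x <= z ->
      (forall j, ex_series (fun i => gw_nstep p n 1 i * convpow p i j * x ^ j)) /\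
      is_series (fun j => Series (fun i => gw_nstep p n 1 i * convpow p i j * x ^ j)) (Nat.iter n Pf (Pf x))).
    { intros x Hx. destruct (HP x Hx) as [HPx HPx'].
      apply tonelli with (A := fun i => gw_nstep p n 1 i * Pf x ^ i).
      + intros i j. apply Rmult_le_pos. apply Rmult_le_pos; auto. apply convpow_nonneg; auto. apply pow_le; lra.
      + intro i. replace (gw_nstep p n 1 i * Pf x ^ i) with (Pf x ^ i * gw_nstep p n 1 i) by ring.
        eapply is_series_ext. 2: apply (is_series_scal_r (gw_nstep p n 1 i)), (convpow_gf p x (Pf x) Hp ltac:(lra) HPx i).
        intro j; simpl. ring.
      + apply IH. auto. }
    split.
    + intro j. simpl. apply Series_nonneg_any. intro i. apply Rmult_le_pos; auto. apply convpow_nonneg; auto.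
    + intros x Hx. destruct (key x Hx) as [_ K]. simpl Nat.iter. rewrite <- iter_swap.
      eapply is_series_ext; [|exact K]. intro j. simpl. unfold gw_trans.
      rewrite <- Series_scal_r. apply Series_ext. intro; ring.
Qed.

Lemma pow_le1 x n : 0 <= x <= 1 -> x ^ n <= 1.
Proof. intro H. rewrite <- (pow1 n). apply pow_incr; lra. Qed.

Lemma pow_anti x k n : 0 <= x <= 1 -> (k <= n)%nat -> x ^ n <= x ^ k.
Proof. intros H Hk. replace n with (k + (n - k))%nat by lia. rewrite pow_add.
  assert (0 <= x ^ k) by (apply pow_le; lra). assert (x ^ (n - k) <= 1) by (apply pow_le1; lra).
  assert (0 <= x ^ (n-k)) by (apply pow_le; lra). nra. Qed.

Lemma exp_mono x y : x <= y -> exp x <= exp y.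
Proof. intro H. destruct (Rle_lt_or_eq_dec _ _ H). left; apply exp_increasing; auto. subst; lra. Qed.

Lemma iter_bound (Pf : R -> R) m K c d : 0 < m < 1 -> 0 <= K -> 0 < c -> 0 < d ->
  (forall x, 0 <= x <= 1 -> 1 - (1-x)*m <= Pf x /\ Pf x <= 1 - (1-x)*m + (1-x)^2*K /\ Pf x <= 1 - (1-x)*c) ->
  (forall y, 0 <= y <= d -> 1 <= Pf (1+y) /\ Pf (1+y) <= 1 + y*m + y^2*K) ->
  exists y0, 0 < y0 <= d /\ Pf (1+y0) <= 1+y0 /\ exists B N0, forall n, (N0 <= n)%nat ->
    0 < 1 - Nat.iter n Pf 0 /\ Nat.iter n Pf (1+y0) - Nat.iter n Pf 0 <= B * (1 - Nat.iter n Pf 0).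
Proof.
  intros Hm HK Hc Hd HP1 HP2.
  set (y0 := Rmin d ((1-m)/(2*(K+1)))).
  assert (Hy0 : 0 < y0 <= d).
  { split. unfold y0. apply Rmin_glb_lt; auto. apply Rdiv_lt_0_compat; lra. apply Rmin_l. }
  assert (HKy : K * y0 <= (1-m)/2).
  { assert (y0 <= (1-m)/(2*(K+1))) by apply Rmin_r.
    assert (y0 * (2*(K+1)) <= 1 - m).
    { apply Rmult_le_reg_r with (/(2*(K+1))). apply Rinv_0_lt_compat; lra.
      rewrite Rmult_assoc, Rinv_r by lra. unfold Rdiv in H. lra. }
    nra. }
  set (mu := (1+m)/2).
  assert (Hmu : m < mu < 1) by (unfold mu; lra).
  set (a := fun n => 1 - Nat.iter n Pf 0).
  set (b := fun n => Nat.iter n Pf (1+y0) - 1).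
  assert (Hx : forall n, Nat.iter n Pf 0 = 1 - a n) by (intro; unfold a; ring).
  assert (Hw : forall n, Nat.iter n Pf (1+y0) = 1 + b n) by (intro; unfold b; ring).
  assert (Ha : forall n, 0 < a n <= m ^ n /\ a n * (m - K * a n) <= a (S n)).
  { induction n.
    - unfold a; simpl. split; [lra|]. destruct (HP1 0 ltac:(lra)) as [? [? ?]]. lra.
    - destruct IHn as [[Ha1 Ha2] _].
      assert (Hmn : m ^ n <= 1) by (apply pow_le1; lra).
      assert (Hrec : a (S n) = 1 - Pf (1 - a n)) by (change (a (S n)) with (1 - Pf (Nat.iter n Pf 0)); rewrite Hx; ring).
      destruct (HP1 (1 - a n) ltac:(lra)) as [L1 [L2 L3]].
      assert (Hrec2 : a (S (S n)) = 1 - Pf (1 - a (S n))) by (change (a (S (S n))) with (1 - Pf (Nat.iter (S n) Pf 0)); rewrite Hx; ring).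
      assert (Hs : 0 < a (S n) <= m ^ S n).
      { rewrite Hrec. simpl. split. nra. nra. }
      split; auto.
      destruct (HP1 (1 - a (S n)) ltac:(simpl in Hs; nra)) as [M1 [M2 M3]].
      rewrite Hrec2. replace (1 - (1 - a (S n))) with (a (S n)) in M2 by ring. nra. }
  assert (Hb : forall n, 0 <= b n <= y0 * mu ^ n /\ b (S n) <= b n * (m + K * b n)).
  { induction n.
    - unfold b; simpl. assert (b0eq : Nat.iter 0 Pf (1 + y0) = 1 + y0) by reflexivity.
      split. lra. destruct (HP2 y0 ltac:(lra)) as [? ?]. nra.
    - destruct IHn as [[Hb1 Hb2] _].
      assert (Hmn : mu ^ n <= 1) by (apply pow_le1; lra).
      assert (Hrec : b (S n) = Pf (1 + b n) - 1) by (change (b (S n)) with (Pf (Nat.iter n Pf (1+y0)) - 1); rewrite Hw; ring).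
      assert (Hbd : b n <= y0) by nra.
      destruct (HP2 (b n) ltac:(lra)) as [L1 L2].
      assert (Hs : 0 <= b (S n) <= y0 * mu ^ S n).
      { rewrite Hrec. simpl. split. lra.
        assert (K * b n <= K * y0) by nra. unfold mu in *. nra. }
      split; auto.
      assert (Hrec2 : b (S (S n)) = Pf (1 + b (S n)) - 1) by (change (b (S (S n))) with (Pf (Nat.iter (S n) Pf (1+y0)) - 1); rewrite Hw; ring).
      simpl in Hs. assert (b (S n) <= y0) by nra.
      destruct (HP2 (b (S n)) ltac:(lra)) as [M1 M2]. rewrite Hrec2. nra. }
  exists y0. split; auto. split.
  { destruct (HP2 y0 ltac:(lra)) as [? ?]. assert (K * y0 * y0 <= (1-m)/2 * y0) by nra. nra. }
  destruct (pow_lt_1_zero m ltac:(rewrite Rabs_pos_eq; lra) (m/(2*(K+1))) ltac:(apply Rdiv_lt_0_compat; lra)) as [N0 HN0].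
  assert (HKa : forall n, (n >= N0)%nat -> K * a n <= m / 2).
  { intros n Hn. specialize (HN0 n Hn). rewrite Rabs_pos_eq in HN0 by (apply pow_le; lra).
    destruct (Ha n) as [[Ha1 Ha2] _].
    assert (a n * (2*(K+1)) <= m).
    { apply Rle_trans with (m ^ n * (2 * (K+1))). nra.
      apply Rmult_le_reg_r with (/(2*(K+1))). apply Rinv_0_lt_compat; lra.
      rewrite Rmult_assoc, Rinv_r by lra. unfold Rdiv in HN0. lra. }
    nra. }
  set (C := 2 * K * (y0 + 1) / m).
  assert (HC : 0 <= C) by (unfold C; apply Rmult_le_pos; [nra| left; apply Rinv_0_lt_compat; lra]).
  assert (Hstep : forall n, (n >= N0)%nat -> b (S n) * a n <= b n * a (S n) * (1 + C * mu ^ n)).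
  { intros n Hn. destruct (Ha n) as [[Ha1 Ha2] Ha3]. destruct (Hb n) as [[Hb1 Hb2] Hb3].
    specialize (HKa n Hn).
    assert (Hmm : m ^ n <= mu ^ n) by (apply pow_incr; lra).
    assert (Hmun : 0 <= mu ^ n) by (apply pow_le; lra).
    assert (Hkey : m + K * b n <= (m - K * a n) * (1 + C * mu ^ n)).
    { assert (HCm : (m / 2) * C = K * (y0 + 1)) by (unfold C; field; lra).
      assert (m / 2 * (C * mu ^ n) <= (m - K * a n) * (C * mu ^ n)).
      { apply Rmult_le_compat_r. apply Rmult_le_pos; auto. lra. }
      assert (K * b n <= K * (y0 * mu ^ n)) by (apply Rmult_le_compat_l; auto).
      assert (K * a n <= K * mu ^ n) by (apply Rmult_le_compat_l; auto; lra).
      nra. }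
    assert (b (S n) * a n <= b n * (m + K * b n) * a n) by (apply Rmult_le_compat_r; lra).
    assert (b n * (m + K * b n) * a n <= b n * (a n * (m - K * a n)) * (1 + C * mu ^ n)).
    { replace (b n * (a n * (m - K * a n)) * (1 + C * mu ^ n)) with (b n * a n * ((m - K * a n) * (1 + C * mu ^ n))) by ring.
      replace (b n * (m + K * b n) * a n) with (b n * a n * (m + K * b n)) by ring.
      apply Rmult_le_compat_l; auto. nra. }
    assert (b n * (a n * (m - K * a n)) * (1 + C * mu ^ n) <= b n * a (S n) * (1 + C * mu ^ n)).
    { apply Rmult_le_compat_r. nra. apply Rmult_le_compat_l; auto. }
    lra. }
  set (E := b N0 / a N0).
  assert (HE : 0 <= E) by (unfold E; destruct (Ha N0) as [[? ?] _]; destruct (Hb N0) as [[? ?] _];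
            apply Rmult_le_pos; auto; left; apply Rinv_0_lt_compat; auto).
  assert (Hind : forall k, b (N0 + k)%nat <= E * exp (C * (1 - mu ^ k) / (1 - mu)) * a (N0 + k)%nat).
  { induction k.
    - rewrite Nat.add_0_r. simpl. replace (C * (1 - 1) / (1 - mu)) with 0 by (field; lra). rewrite exp_0.
      unfold E. destruct (Ha N0) as [[? ?] _]. field_simplify; lra.
    - set (n := (N0 + k)%nat) in *. replace (N0 + S k)%nat with (S n) by (unfold n; lia).
      assert (Hn : (n >= N0)%nat) by (unfold n; lia).
      specialize (Hstep n Hn).
      destruct (Ha n) as [[Ha1 Ha2] _]. destruct (Ha (S n)) as [[Ha1' _] _].
      assert (Hmk : mu ^ n <= mu ^ k) by (apply pow_anti; [lra| unfold n; lia]).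
      set (X := exp (C * (1 - mu ^ k) / (1 - mu))).
      assert (HX : 0 < X) by apply exp_pos.
      assert (H1 : b (S n) * a n <= E * X * a n * a (S n) * (1 + C * mu ^ n)).
      { apply Rle_trans with (1 := Hstep).
        replace (E * X * a n * a (S n) * (1 + C * mu ^ n)) with ((E * X * a n) * (a (S n) * (1 + C * mu ^ n))) by ring.
        replace (b n * a (S n) * (1 + C * mu ^ n)) with (b n * (a (S n) * (1 + C * mu ^ n))) by ring.
        apply Rmult_le_compat_r; [|exact IHk]. assert (0 <= mu ^ n) by (apply pow_le; lra).
        apply Rmult_le_pos; [lra|]. assert (0 <= C * mu ^ n) by (apply Rmult_le_pos; lra). lra. }
      assert (H2 : b (S n) <= E * X * a (S n) * (1 + C * mu ^ n)).
      { apply Rmult_le_reg_r with (a n); auto. lra. }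
      assert (H3 : 1 + C * mu ^ n <= exp (C * mu ^ k)).
      { apply Rle_trans with (1 + C * mu ^ k). nra. apply exp_ineq1_le. }
      assert (H4 : X * exp (C * mu ^ k) = exp (C * (1 - mu ^ S k) / (1 - mu))).
      { unfold X. rewrite <- exp_plus. f_equal. simpl. field. lra. }
      rewrite <- H4.
      assert (0 <= E * X * a (S n)) by (apply Rmult_le_pos; [apply Rmult_le_pos; lra | lra]).
      nra. }
  exists (1 + E * exp (C / (1 - mu))), N0. intros n Hn.
  destruct (Ha n) as [[Ha1 _] _]. split. rewrite Hx. lra.
  rewrite Hx, Hw.
  specialize (Hind (n - N0)%nat). replace (N0 + (n - N0))%nat with n in Hind by lia.
  assert (exp (C * (1 - mu ^ (n - N0)) / (1 - mu)) <= exp (C / (1 - mu))).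
  { apply exp_mono. unfold Rdiv. apply Rmult_le_compat_r. left; apply Rinv_0_lt_compat; lra.
    assert (0 <= mu ^ (n - N0)) by (apply pow_le; lra). nra. }
  assert (E * exp (C * (1 - mu ^ (n - N0)) / (1 - mu)) * a n <= E * exp (C / (1 - mu)) * a n).
  { apply Rmult_le_compat_r; [lra|]. apply Rmult_le_compat_l; auto. }
  nra.
Qed.

Lemma bern x j : 0 <= x <= 1 -> 1 - INR j * (1 - x) <= x ^ j.
Proof. intro H. induction j. simpl; lra. rewrite S_INR. simpl.
  assert (0 <= INR j) by apply pos_INR.
  assert (x * (1 - INR j * (1 - x)) <= x * x ^ j) by (apply Rmult_le_compat_l; lra).
  assert (0 <= INR j * (1-x) * (1-x)) by (apply Rmult_le_pos; [apply Rmult_le_pos|]; lra). nra. Qed.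

Lemma up2 x j : 0 <= x <= 1 -> x ^ j <= 1 - INR j * (1 - x) + INR j ^ 2 * (1 - x) ^ 2.
Proof. intro H. induction j. simpl; lra. rewrite S_INR. change (x ^ S j) with (x * x ^ j).
  assert (0 <= INR j) by apply pos_INR.
  apply Rle_trans with (x * (1 - INR j * (1 - x) + INR j ^ 2 * (1 - x) ^ 2)).
  apply Rmult_le_compat_l; lra.
  assert (E : 1 - (INR j + 1) * (1 - x) + (INR j + 1) ^ 2 * (1 - x) ^ 2 - x * (1 - INR j * (1 - x) + INR j ^ 2 * (1 - x) ^ 2)
     = (INR j + 1) * (1 - x) ^ 2 + INR j ^ 2 * (1 - x) ^ 3) by ring.
  assert (0 <= (INR j + 1) * (1 - x) ^ 2) by (apply Rmult_le_pos; [lra | apply pow_le; lra]).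
  assert (0 <= INR j ^ 2 * (1 - x) ^ 3) by (apply Rmult_le_pos; [apply pow2_ge_0 | apply pow_le; lra]).
  lra. Qed.

Lemma up3 y j : 0 <= y -> (1 + y) ^ j <= 1 + INR j * y + INR j ^ 2 * y ^ 2 * (1 + y) ^ j.
Proof. intro H. induction j. simpl; lra. rewrite S_INR. change ((1 + y) ^ S j) with ((1 + y) * (1 + y) ^ j).
  assert (0 <= INR j) by apply pos_INR.
  assert (Hp : 1 <= (1 + y) ^ j) by (pose proof (pow_incr 1 (1+y) j ltac:(lra)) as Hq; rewrite pow1 in Hq; exact Hq).
  set (f := (1 + y) ^ j) in *.
  apply Rle_trans with ((1 + y) * (1 + INR j * y + INR j ^ 2 * y ^ 2 * f)).
  apply Rmult_le_compat_l; lra.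
  assert (E : 1 + (INR j + 1) * y + (INR j + 1) ^ 2 * y ^ 2 * ((1 + y) * f) - (1 + y) * (1 + INR j * y + INR j ^ 2 * y ^ 2 * f)
     = y ^ 2 * ((2 * INR j + 1) * ((1 + y) * f) - INR j)) by ring.
  assert (1 <= (1 + y) * f) by nra.
  assert (0 <= (2 * INR j + 1) * ((1 + y) * f) - INR j) by nra.
  assert (0 <= y ^ 2 * ((2 * INR j + 1) * ((1 + y) * f) - INR j)) by (apply Rmult_le_pos; [apply pow2_ge_0| lra]).
  lra. Qed.

Lemma xpow_le x j : 0 <= x <= 1 -> (1 <= j)%nat -> x ^ j <= x.
Proof. intros H Hj. destruct j. lia. simpl. assert (x ^ j <= 1) by (rewrite <- (pow1 j); apply pow_incr; lra). nra. Qed.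

Lemma is_series_lin (a b : nat -> R) la lb al be :
  is_series a la -> is_series b lb -> is_series (fun n => al * a n + be * b n) (al * la + be * lb).
Proof.
  intros Ha Hb.
  pose proof (is_series_plus (K:=R_AbsRing) (V:=R_NormedModule) _ _ _ _
     (is_series_scal_l (K:=R_AbsRing) (V:=R_NormedModule) al _ _ Ha)
     (is_series_scal_l (K:=R_AbsRing) (V:=R_NormedModule) be _ _ Hb)) as H.
  exact H.
Qed.

Lemma series_at0 (c : nat -> R) : is_series (fun j => c j * 0 ^ j) (c 0%nat).
Proof. eapply is_series_ext; [|apply (delta_series (c 0%nat) 0)]. intro j; destruct j; simpl; ring. Qed.

Theorem theorem2p3 (p g : nat -> R) (m : R) :
  prob_distr p ->
  0 < p 0%nat + p 1%nat < 1 ->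
  is_series (fun j => INR j * p j) m ->
  m < 1 ->
  is_yaglom_limit p g ->
  Rbar_lt (Finite 1) (CV_radius p) ->
  Rbar_lt (Finite 1) (CV_radius g).
Proof.
  intros [Hp0 Hp1] Hpp Hm Hm1 [[Hg0 Hg1] [Hg00 Hglim]] Hrad.
  assert (Hrho : exists rho, 1 < rho /\ Rbar_lt (Finite rho) (CV_radius p)).
  { destruct (CV_radius p) as [r| |]; simpl in Hrad. exists ((1+r)/2); simpl; lra.
    exists 2; simpl; split; [lra|exact I]. contradiction. }
  destruct Hrho as [rho [Hrho Hrr]].
  assert (HA : ex_series (fun n => Rabs (p n * rho ^ n))).
  { apply CV_disk_inside. rewrite Rabs_pos_eq by lra. exact Hrr. }
  assert (HD2 : ex_series (fun n => Rabs (PS_derive (PS_derive p) n * rho ^ n))).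
  { apply CV_disk_inside. rewrite Rabs_pos_eq by lra. rewrite !CV_radius_derive. exact Hrr. }
  set (W := fun j => INR j ^ 2 * p j * rho ^ j).
  assert (HW0 : forall j, 0 <= W j).
  { intro j; unfold W. apply Rmult_le_pos. apply Rmult_le_pos; auto. apply pow2_ge_0. apply pow_le; lra. }
  assert (HW : ex_series W).
  { apply (ex_series_incr_n W 2).
    apply (ex_series_le (K:=R_AbsRing) (V:=R_CompleteNormedModule)) with (fun k => 2 * rho ^ 2 * Rabs (PS_derive (PS_derive p) k * rho ^ k)).
    - intro k. change (norm (W (2 + k)%nat)) with (Rabs (W (2 + k)%nat)). rewrite Rabs_pos_eq by auto.
      unfold W, PS_derive. rewrite Rabs_pos_eq.
      2: { apply Rmult_le_pos; [|apply pow_le; lra]. apply Rmult_le_pos; [apply pos_INR|]. apply Rmult_le_pos; [apply pos_INR| auto]. }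
      rewrite pow_add. replace (S (S k)) with (2 + k)%nat by lia.
      rewrite (S_INR k), plus_INR. simpl (INR 2).
      assert (0 <= INR k) by apply pos_INR.
      assert (0 <= p (2 + k)%nat * rho ^ k * (rho * rho)) by (apply Rmult_le_pos; [apply Rmult_le_pos; [auto| apply pow_le; lra]| nra]).
      set (u := p (2 + k)%nat * rho ^ k * (rho * rho)) in *.
      assert (0 <= (INR k + 2) * INR k * u) by (apply Rmult_le_pos; [nra| auto]).
      unfold u in *.
      replace ((INR k + 2) ^ 2 * p (2 + k)%nat * (rho ^ 2 * rho ^ k)) with ((INR k + 2) * (INR k + 2) * (p (2 + k)%nat * rho ^ k * (rho * rho))) by ring.
      replace (2 * rho ^ 2 * ((INR k + 1) * ((INR k + 2) * p (2 + k)%nat) * rho ^ k)) with (2 * (INR k + 1) * (INR k + 2) * (p (2 + k)%nat * rho ^ k * (rho * rho))) by ring.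
      assert (E : 2 * (INR k + 1) * (INR k + 2) * (p (2 + k)%nat * rho ^ k * (rho * rho)) - (INR k + 2) * (INR k + 2) * (p (2 + k)%nat * rho ^ k * (rho * rho)) = (INR k + 2) * INR k * (p (2 + k)%nat * rho ^ k * (rho * rho))) by ring.
      lra.
    - destruct HD2 as [l Hl]. exists (l * (2 * rho ^ 2)).
      eapply is_series_ext; [|apply (is_series_scal_r (2 * rho ^ 2) _ _ Hl)]. intro; simpl; ring. }
  set (K := Series W).
  assert (HK : is_series W K) by (apply Series_correct; auto).
  assert (HK0 : 0 <= K) by (apply series_nonneg with W; auto).
  set (Pf := fun x => Series (fun j => p j * x ^ j)).
  assert (HPf : forall x, 0 <= x <= rho -> is_series (fun j => p j * x ^ j) (Pf x)).
  { intros x Hx. apply Series_correct.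
    apply (ex_series_le (K:=R_AbsRing) (V:=R_CompleteNormedModule)) with (fun n => Rabs (p n * rho ^ n)); auto.
    intro n. change (norm (p n * x ^ n)) with (Rabs (p n * x ^ n)).
    rewrite !Rabs_pos_eq. apply Rmult_le_compat_l; auto. apply pow_incr; lra.
    apply Rmult_le_pos; auto; apply pow_le; lra. apply Rmult_le_pos; auto; apply pow_le; lra. }
  assert (Hdp : is_series (fun j => (if Nat.eqb j 0 then p 0%nat else 0) * 1 ^ j) (p 0%nat)) by apply delta_series.
  set (c := 1 - p 0%nat).
  assert (Hc : 0 < c) by (unfold c; specialize (Hp0 1%nat); lra).
  assert (Hmc : c <= m).
  { unfold c. replace (1 - p 0%nat) with (1 * 1 + (-1) * p 0%nat) by ring.
    apply series_le' with (1 := is_series_lin _ _ _ _ 1 (-1) Hp1 Hdp) (2 := Hm).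
    intro j; destruct j. simpl; lra. rewrite S_INR. simpl. assert (0 <= INR j) by apply pos_INR. specialize (Hp0 (S j)). nra. }
  assert (HP1 : forall x, 0 <= x <= 1 -> 1 - (1-x)*m <= Pf x /\ Pf x <= 1 - (1-x)*m + (1-x)^2*K /\ Pf x <= 1 - (1-x)*c).
  { intros x Hx. assert (HPx := HPf x ltac:(lra)). split; [|split].
    - replace (1 - (1-x)*m) with (1 * 1 + (-(1-x)) * m) by ring.
      apply series_le' with (1 := is_series_lin _ _ _ _ 1 (-(1-x)) Hp1 Hm) (2 := HPx).
      intro j. pose proof (bern x j Hx). specialize (Hp0 j). nra.
    - replace (1 - (1-x)*m + (1-x)^2*K) with (1 * (1 * 1 + (-(1-x)) * m) + (1-x)^2 * K) by ring.
      apply series_le' with (1 := HPx) (2 := is_series_lin _ _ _ _ 1 ((1-x)^2) (is_series_lin _ _ _ _ 1 (-(1-x)) Hp1 Hm) HK).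
      intro j. pose proof (up2 x j Hx). specialize (Hp0 j). unfold W.
      assert (1 <= rho ^ j) by (pose proof (pow_incr 1 rho j ltac:(lra)) as Hq; rewrite pow1 in Hq; exact Hq).
      assert (0 <= (1-x)^2 * INR j ^ 2 * p j) by (apply Rmult_le_pos; [apply Rmult_le_pos; apply pow2_ge_0| auto]).
      assert ((1-x)^2 * INR j ^ 2 * p j <= (1-x)^2 * (INR j ^ 2 * p j * rho ^ j)) by nra.
      nra.
    - unfold c. replace (1 - (1-x)*(1 - p 0%nat)) with (x * 1 + (1-x) * p 0%nat) by ring.
      apply series_le' with (1 := HPx) (2 := is_series_lin _ _ _ _ x (1-x) Hp1 Hdp).
      intro j; destruct j; simpl. lra. specialize (Hp0 (S j)).
      assert (x * x ^ j <= x) by (apply (xpow_le x (S j)); [lra|lia]). nra. }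
  assert (HP2 : forall y, 0 <= y <= rho - 1 -> 1 <= Pf (1+y) /\ Pf (1+y) <= 1 + y*m + y^2*K).
  { intros y Hy. assert (HPx := HPf (1+y) ltac:(lra)). split.
    - apply series_le' with (1 := Hp1) (2 := HPx). intro j.
      assert (1 <= (1+y) ^ j) by (pose proof (pow_incr 1 (1+y) j ltac:(lra)) as Hq; rewrite pow1 in Hq; exact Hq).
      specialize (Hp0 j). nra.
    - replace (1 + y*m + y^2*K) with (1 * (1 * 1 + y * m) + y^2 * K) by ring.
      apply series_le' with (1 := HPx) (2 := is_series_lin _ _ _ _ 1 (y^2) (is_series_lin _ _ _ _ 1 y Hp1 Hm) HK).
      intro j. pose proof (up3 y j ltac:(lra)). specialize (Hp0 j). unfold W.
      assert ((1+y) ^ j <= rho ^ j) by (apply pow_incr; lra).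
      assert (0 <= y^2 * INR j ^ 2 * p j) by (apply Rmult_le_pos; [apply Rmult_le_pos; apply pow2_ge_0| auto]).
      assert (y^2 * INR j ^ 2 * p j * (1+y)^j <= y^2 * INR j ^ 2 * p j * rho ^ j) by (apply Rmult_le_compat_l; auto).
      assert (p j * (1 + y) ^ j <= p j * (1 + INR j * y + INR j ^ 2 * y ^ 2 * (1 + y) ^ j)) by (apply Rmult_le_compat_l; auto).
      nra. }
  destruct (iter_bound Pf m K c (rho - 1) ltac:(lra) HK0 Hc ltac:(lra) HP1 HP2) as [y0 [Hy0 [Hfix [B [N0 Hbd]]]]].
  set (z := 1 + y0).
  assert (HPz : forall x, 0 <= x <= z -> is_series (fun j => p j * x^j) (Pf x) /\ 0 <= Pf x <= z).
  { intros x Hx. assert (HPx := HPf x ltac:(unfold z in *; lra)). split; auto. split.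
    apply series_nonneg with (2 := HPx). intro; apply Rmult_le_pos; auto; apply pow_le; lra.
    apply Rle_trans with (Pf z); auto.
    apply series_le' with (1 := HPx) (2 := HPf z ltac:(unfold z; lra)).
    intro j. apply Rmult_le_compat_l; auto. apply pow_incr; lra. }
  assert (HPf1 : Pf 1 = 1).
  { pose proof (is_series_unique _ _ Hp1) as Hq. unfold Pf. rewrite (Series_ext _ p) by (intro; rewrite pow1; ring). exact Hq. }
  assert (Hgw := gw_gf p Pf z Hp0 ltac:(unfold z; lra) HPz HPf1).
  assert (Hgz : forall j, g j * z ^ j <= Rmax B 0).
  { intro j. destruct j as [|j]. rewrite Hg00. simpl. rewrite Rmult_0_l. apply Rmax_r.
    apply Rle_trans with B; [|apply Rmax_l].
    assert (Hl : is_lim_seq (fun n => gw_cond p n 1 (S j) * z ^ S j) (g (S j) * z ^ S j)).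
    { apply (is_lim_seq_scal_r _ (z ^ S j) (g (S j))). apply Hglim; lia. }
    assert (Rbar_le (g (S j) * z ^ S j) B).
    { apply (is_lim_seq_le_loc _ _ _ _) with (2 := Hl) (3 := is_lim_seq_const B).
      exists N0. intros n Hn. destruct (Hbd n Hn) as [Ha Hb].
      destruct (Hgw n) as [Hnn Hser].
      assert (H0 : gw_nstep p n 1 0 = Nat.iter n Pf 0).
      { pose proof (is_series_unique _ _ (Hser 0 ltac:(unfold z; lra))) as Hq.
        rewrite <- Hq. symmetry. apply is_series_unique. apply series_at0. }
      assert (Hz := Hser z ltac:(unfold z; lra)).
      assert (Ht := term0n_le (fun j => gw_nstep p n 1 j * z ^ j) _ (S j) ltac:(lia) ltac:(intro; apply Rmult_le_pos; auto; apply pow_le; unfold z; lra) Hz).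
      simpl in Ht. unfold gw_cond. rewrite H0.
      unfold Rdiv. rewrite Rmult_assoc, (Rmult_comm (/ _)), <- Rmult_assoc.
      apply Rmult_le_reg_r with (1 - Nat.iter n Pf 0); auto.
      rewrite Rmult_assoc, Rinv_l by lra. rewrite H0 in Ht. simpl. unfold z in *. lra. }
    exact H. }
  destruct (CV_radius_bounded g) as [Hub _].
  assert (Hzr : Rbar_le z (CV_radius g)).
  { apply Hub. exists (Rmax B 0). intro n. rewrite Rabs_pos_eq. apply Hgz.
    apply Rmult_le_pos; auto. apply pow_le; unfold z; lra. }
  destruct (CV_radius g); simpl in *; auto; unfold z in Hzr; lra.
Qed.
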